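(* Let $G=A*_C\varphi$ with $|A/C|\ge2$, $|A/\varphi(C)|\ge2$ and generating set $\{t\}\cup(A\setminus\{1\})$. Fix $g\in A\setminus C$ and $h\in A\setminus\varphi(C)$ and for $i\ge0$ let $$w_i=t^{10^i}gt^{-10^i}h\,t^{10^i}g^{-1}t^{-10^i}h^{-1}\,t^{2\cdot10^i}gt^{-2\cdot10^i}h\,t^{3\cdot10^i}g^{-1}t^{-3\cdot10^i}h^{-1}.$$ Then: (1) $c_{w_i}(\overline{w_i^n})=n$ for all $i\ge0$, $n\ge1$; (2) $c_{w_i^{-1}}(\overline{w_i^n})=0$ for all $i\ge0$, $n\ge1$; (3) $c_{w_j}(\overline{w_i^n})=c_{w_j^{-1}}(\overline{w_i^n})=0$ for all $j>i\ge0$, $n\ge1$; (4) $\overline{w_i}\in[G,G]$ for all $i\ge0$.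
   Context: $A$ is a group, $C\le A$, $\varphi:C\to A$ an injective homomorphism, $G=A*_C\varphi=\langle A,t\mid c=t^{-1}\varphi(c)t\ \forall c\in C\rangle$. Words are finite sequences of letters from $\{t,t^{-1}\}\cup(A\setminus\{1\})$; $\bar u$ is the element represented, $|u|$ the length, $u^{-1}$ the formal inverse word, $|x|$ the word length of $x\in G$. For a nonempty word $w$ and a word $u$, $|u|_w$ is the maximal number of pairwise non-overlapping occurrences of $w$ as a contiguous subword of $u$, and $c_w(x)=|x|-\min\{|v|-|v|_w:\bar v=x\}$. *)

(* Defs.v *)
From Stdlib Require Import List Arith.
Import ListNotations.

Record Grp := {
  gcar :> Type;
  gmul : gcar -> gcar -> gcar;
  gone : gcar;
  ginv : gcar -> gcar;
  gmulA : forall x y z, gmul x (gmul y z) = gmul (gmul x y) z;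
  gmul1 : forall x, gmul gone x = x;
  gmulV : forall x, gmul (ginv x) x = gone }.

Arguments gmul {g}. Arguments gone {g}. Arguments ginv {g}.

Inductive letter (A : Type) := LT | LTi | LA (a : A).
Arguments LT {A}. Arguments LTi {A}. Arguments LA {A} a.

Definition is_word (A : Grp) (u : list (letter A)) : Prop :=
  forall a, In (LA a) u -> a <> gone.

Definition linv (A : Grp) (x : letter A) : letter A :=
  match x with LT => LTi | LTi => LT | LA a => LA (ginv a) end.

Definition winv (A : Grp) (u : list (letter A)) : list (letter A) :=
  rev (map (linv A) u).

Definition is_subgroup (A : Grp) (C : A -> Prop) : Prop :=
  C gone /\ forall x y, C x -> C y -> C (gmul x (ginv y)).

(* phi : C -> A injective homomorphism (values of phi outside C irrelevant) *)
Definition is_inj_hom (A : Grp) (C : A -> Prop) (phi : A -> A) : Prop :=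
  (forall x y, C x -> C y -> phi (gmul x y) = gmul (phi x) (phi y)) /\
  (forall x y, C x -> C y -> phi x = phi y -> x = y).

(* u and v represent the same element of G = A *_C phi :
   congruence generated by the multiplication table of A, t t^-1 = 1,
   and c = t^{-1} phi(c) t for c in C. *)
Inductive hnn_eq (A : Grp) (C : A -> Prop) (phi : A -> A) :
  list (letter A) -> list (letter A) -> Prop :=
| he_refl u : hnn_eq A C phi u u
| he_sym u v : hnn_eq A C phi u v -> hnn_eq A C phi v u
| he_trans u v w : hnn_eq A C phi u v -> hnn_eq A C phi v w -> hnn_eq A C phi u w
| he_ctx x u v y : hnn_eq A C phi u v -> hnn_eq A C phi (x ++ u ++ y) (x ++ v ++ y)
| he_one : hnn_eq A C phi [LA gone] []
| he_mul a b : hnn_eq A C phi [LA a; LA b] [LA (gmul a b)]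
| he_tti : hnn_eq A C phi [LT; LTi] []
| he_tit : hnn_eq A C phi [LTi; LT] []
| he_conj c : C c -> hnn_eq A C phi [LA c] [LTi; LA (phi c); LT].

(* u contains k pairwise non-overlapping occurrences of w *)
Definition occ_k (A : Type) (w u : list (letter A)) (k : nat) : Prop :=
  exists (x0 : list (letter A)) (xs : list (list (letter A))),
    length xs = k /\ u = x0 ++ concat (map (fun x => w ++ x) xs).

Definition count_occ (A : Type) (w u : list (letter A)) (k : nat) : Prop :=
  occ_k A w u k /\ forall k', occ_k A w u k' -> k' <= k.

Definition is_min (P : nat -> Prop) (m : nat) : Prop :=
  P m /\ forall k, P k -> m <= k.

Definition word_length (A : Grp) (C : A -> Prop) (phi : A -> A)
  (x : list (letter A)) (L : nat) : Prop :=
  is_min (fun l => exists v, is_word A v /\ hnn_eq A C phi v x /\ length v = l) L.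

Definition cw_val (A : Grp) (C : A -> Prop) (phi : A -> A)
  (w x : list (letter A)) (n : nat) : Prop :=
  exists L M, word_length A C phi x L /\
    is_min (fun m => exists v k, is_word A v /\ hnn_eq A C phi v x /\
                       count_occ A w v k /\ m = length v - k) M /\
    n = L - M.

Definition in_commutator (A : Grp) (C : A -> Prop) (phi : A -> A)
  (x : list (letter A)) : Prop :=
  exists ps : list (list (letter A) * list (letter A)),
    hnn_eq A C phi x
      (concat (map (fun p => fst p ++ snd p ++ winv A (fst p) ++ winv A (snd p)) ps)).

Definition tp (A : Type) (k : nat) : list (letter A) := repeat LT k.
Definition tn (A : Type) (k : nat) : list (letter A) := repeat LTi k.

Definition w_i (A : Grp) (g h : A) (i : nat) : list (letter A) :=
  let k := 10 ^ i in
  tp A k ++ [LA g] ++ tn A k ++ [LA h] ++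
  tp A k ++ [LA (ginv g)] ++ tn A k ++ [LA (ginv h)] ++
  tp A (2 * k) ++ [LA g] ++ tn A (2 * k) ++ [LA h] ++
  tp A (3 * k) ++ [LA (ginv g)] ++ tn A (3 * k) ++ [LA (ginv h)].

Definition wpow (A : Type) (u : list (letter A)) (n : nat) : list (letter A) :=
  concat (repeat u n).

(* Main.v *)
Require Import Defs.
From Stdlib Require Import List Arith Lia Bool.
From Stdlib Require Import ClassicalEpsilon FunctionalExtensionality PropExtensionality.
Import ListNotations.

Section Grp.
Variable A : Grp.

Lemma gcancel (a y z : A) : gmul a y = gmul a z -> y = z.
Proof.
  intro H. rewrite <- (gmul1 A y), <- (gmul1 A z), <- (gmulV A a), <- !gmulA, H. reflexivity.
Qed.

Lemma gmul1r (x : A) : gmul x gone = x.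
Proof.
  apply (gcancel (ginv x)). rewrite gmulA, gmulV, gmul1. reflexivity.
Qed.

Lemma gmulVr (x : A) : gmul x (ginv x) = gone.
Proof.
  apply (gcancel (ginv x)). rewrite gmulA, gmulV, gmul1, gmul1r. reflexivity.
Qed.

Lemma ginvK (x : A) : ginv (ginv x) = x.
Proof.
  apply (gcancel (ginv x)). rewrite gmulVr, gmulV. reflexivity.
Qed.

Lemma ginv1 : ginv (gone : A) = gone.
Proof. rewrite <- (gmul1 A (ginv gone)). apply gmulVr. Qed.

Lemma ginvM (x y : A) : ginv (gmul x y) = gmul (ginv y) (ginv x).
Proof.
  apply (gcancel (gmul x y)). rewrite gmulVr.
  rewrite !gmulA. rewrite <- (gmulA A x y (ginv y)), gmulVr, gmul1r, gmulVr. reflexivity.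
Qed.

Lemma gmulKV (x y : A) : gmul (gmul x (ginv y)) y = x.
Proof. rewrite <- gmulA, gmulV, gmul1r. reflexivity. Qed.

Lemma gmulVK (x y : A) : gmul (ginv x) (gmul x y) = y.
Proof. rewrite gmulA, gmulV, gmul1. reflexivity. Qed.

Lemma gmulK (x y : A) : gmul x (gmul (ginv x) y) = y.
Proof. rewrite gmulA, gmulVr, gmul1. reflexivity. Qed.

Lemma gmulKr (x y : A) : gmul (gmul x y) (ginv y) = x.
Proof. rewrite <- gmulA, gmulVr, gmul1r. reflexivity. Qed.

End Grp.
Section HNN.
Variable A : Grp.
Variable C : A -> Prop.
Variable phi : A -> A.
Hypothesis HC : is_subgroup A C.
Hypothesis Hphi : is_inj_hom A C phi.

Notation "x * y" := (gmul x y).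
Notation "1" := (gone : gcar A).

Lemma C1 : C 1. Proof. apply HC. Qed.
Lemma CV x : C x -> C (ginv x).
Proof. intro H. rewrite <- (gmul1 A (ginv x)). apply HC; auto using C1. Qed.
Lemma CM x y : C x -> C y -> C (x * y).
Proof. intros. rewrite <- (ginvK A y). apply HC; auto using CV. Qed.

Lemma phiM x y : C x -> C y -> phi (x * y) = phi x * phi y.
Proof. apply Hphi. Qed.
Lemma phi_inj x y : C x -> C y -> phi x = phi y -> x = y.
Proof. apply Hphi. Qed.
Lemma phi1 : phi 1 = 1.
Proof.
  apply (gcancel A (phi 1)). rewrite <- phiM by apply C1. rewrite gmul1, gmul1r. reflexivity.
Qed.
Lemma phiV x : C x -> phi (ginv x) = ginv (phi x).
Proof.
  intro H. apply (gcancel A (phi x)). rewrite gmulVr, <- phiM by auto using CV.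
  rewrite gmulVr. apply phi1.
Qed.

Definition inH (b : bool) (y : A) : Prop :=
  if b then C y else exists c, C c /\ phi c = y.

Lemma inH1 b : inH b 1.
Proof. destruct b; simpl. apply C1. exists 1. split. apply C1. apply phi1. Qed.
Lemma inHV b x : inH b x -> inH b (ginv x).
Proof.
  destruct b; simpl. apply CV. intros [c [Hc <-]]. exists (ginv c). split. auto using CV. apply phiV; auto.
Qed.
Lemma inHM b x y : inH b x -> inH b y -> inH b (x * y).
Proof.
  destruct b; simpl. apply CM. intros [c [Hc <-]] [d [Hd <-]]. exists (c * d). split. auto using CM. apply phiM; auto.
Qed.
Lemma inH_cancel_l b x y : inH b x -> inH b (x * y) -> inH b y.
Proof.
  intros H1 H2. rewrite <- (gmulVK A x y). apply inHM; auto using inHV.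
Qed.

Definition rep (b : bool) (x : A) : A :=
  if excluded_middle_informative (inH b x) then 1
  else epsilon (inhabits (1 : gcar A)) (fun r => inH b (x * ginv r)).

Lemma rep_spec b x : inH b (x * ginv (rep b x)).
Proof.
  unfold rep. destruct (excluded_middle_informative (inH b x)) as [H|H].
  - rewrite ginv1, gmul1r. exact H.
  - apply (epsilon_spec (inhabits (1 : gcar A)) (fun r => inH b (x * ginv r))).
    exists x. rewrite gmulVr. apply inH1.
Qed.

Lemma gsplit (x y r : A) : x * ginv r = (x * ginv y) * (y * ginv r).
Proof. rewrite <- gmulA, gmulVK. reflexivity. Qed.

Lemma inH_inv_mul b x y : inH b (x * ginv y) -> inH b (y * ginv x).
Proof. intro H. apply inHV in H. rewrite ginvM, ginvK in H. exact H. Qed.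

Lemma rep_eq b x y : inH b (x * ginv y) -> rep b x = rep b y.
Proof.
  intro Hxy. unfold rep.
  destruct (excluded_middle_informative (inH b x)) as [Hx|Hx];
  destruct (excluded_middle_informative (inH b y)) as [Hy|Hy]; auto.
  - exfalso. apply Hy. replace y with ((y * ginv x) * x) by apply gmulKV.
    apply inHM; auto using inH_inv_mul.
  - exfalso. apply Hx. replace x with ((x * ginv y) * y) by apply gmulKV.
    apply inHM; auto.
  - f_equal. apply functional_extensionality. intro r. apply propositional_extensionality. split; intro H.
    + rewrite (gsplit y x r). apply inHM; auto using inH_inv_mul.
    + rewrite (gsplit x y r). apply inHM; auto.
Qed.

Lemma rep_one b x : rep b x = 1 <-> inH b x.
Proof.
  split.
  - intro H. pose proof (rep_spec b x) as Hs. rewrite H, ginv1, gmul1r in Hs. exact Hs.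
  - intro H. unfold rep. destruct (excluded_middle_informative (inH b x)); tauto.
Qed.

Lemma rep_idem b x : rep b (rep b x) = rep b x.
Proof. apply rep_eq. apply inH_inv_mul. apply rep_spec. Qed.

Lemma rep_mulH b h x : inH b h -> rep b (h * x) = rep b x.
Proof. intro H. apply rep_eq. rewrite gmulKr. exact H. Qed.

Definition phinv (y : A) : A := epsilon (inhabits (1 : gcar A)) (fun c => C c /\ phi c = y).

Lemma phinv_spec y : inH false y -> C (phinv y) /\ phi (phinv y) = y.
Proof. intro H. apply (epsilon_spec (inhabits (1 : gcar A)) (fun c => C c /\ phi c = y)). exact H. Qed.

Lemma phinv_phi c : C c -> phinv (phi c) = c.
Proof.
  intro Hc. destruct (phinv_spec (phi c)) as [H1 H2]. exists c; auto.
  apply phi_inj; auto.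
Qed.

Definition lead (b : bool) (x : A) : A :=
  if b then phi (x * ginv (rep true x)) else phinv (x * ginv (rep false x)).

Lemma lead_in b x : inH (negb b) (lead b x).
Proof.
  destruct b; simpl.
  - exists (x * ginv (rep true x)). split; auto. apply (rep_spec true).
  - apply phinv_spec. apply (rep_spec false).
Qed.

Definition psi (c : bool) (y : A) : A := if c then phi y else phinv y.

Lemma lead_psi c z : lead c z = psi c (z * ginv (rep c z)).
Proof. destruct c; reflexivity. Qed.

Lemma psi_in b h : inH b h -> inH (negb b) (psi b h).
Proof.
  destruct b; simpl; intro H.
  - exists h; auto.
  - apply phinv_spec; auto.
Qed.

Lemma psi_inv b h : inH b h -> psi (negb b) (psi b h) = h.
Proof.
  destruct b; simpl; intro H.
  - apply phinv_phi; auto.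
  - apply phinv_spec; auto.
Qed.

Definition state := (gcar A * list (bool * gcar A))%type.
Definition isone (x : A) : bool := if excluded_middle_informative (x = 1) then true else false.
Lemma isone_iff x : isone x = true <-> x = 1.
Proof. unfold isone. destruct (excluded_middle_informative (x = 1)); split; congruence. Qed.

Definition push (b : bool) (s : state) : state := (lead b (fst s), (b, rep b (fst s)) :: snd s).
Definition act_t (b : bool) (s : state) : state :=
  match snd s with
  | (e, r1) :: L' => if isone (rep b (fst s)) && Bool.eqb e (negb b)
                     then (lead b (fst s) * r1, L') else push b s
  | [] => push b s
  end.
Definition act_letter (l : letter A) (s : state) : state :=
  match l with LT => act_t true s | LTi => act_t false s | LA x => (x * fst s, snd s) end.
Definition act (u : list (letter A)) (s : state) : state := fold_right act_letter s u.

Lemma act_app u v s : act (u ++ v) s = act u (act v s).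
Proof. unfold act. apply fold_right_app. Qed.

Fixpoint nopinch (L : list (bool * gcar A)) : Prop :=
  match L with
  | (b1, r1) :: L' => match L' with (b2, _) :: _ => (b1 <> b2 -> r1 <> 1) /\ nopinch L' | [] => True end
  | [] => True
  end.
Definition validL (L : list (bool * gcar A)) : Prop :=
  Forall (fun p => rep (fst p) (snd p) = snd p) L /\ nopinch L.
Definition valid (s : state) : Prop := validL (snd s).

Lemma valid_push b s : valid s ->
  ~ (rep b (fst s) = 1 /\ exists r L', snd s = (negb b, r) :: L') -> valid (push b s).
Proof.
  destruct s as [a L]. unfold valid, validL, push; simpl. intros [HF HN] Hn. split.
  - constructor; auto. simpl. apply rep_idem.
  - destruct L as [|[e r1] L']; simpl; auto. split; auto.
    intros Hne Hr. apply Hn. split; auto. exists r1, L'. f_equal. f_equal. destruct b, e; simpl in *; congruence.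
Qed.

Lemma valid_tail x L (a a' : A) : valid (a, x :: L) -> valid (a', L).
Proof.
  unfold valid, validL; simpl. intros [HF HN]. inversion HF; subst. split; auto.
  destruct x as [b r]. destruct L as [|[]]; auto. destruct HN; auto.
Qed.

Lemma valid_act_t b s : valid s -> valid (act_t b s).
Proof.
  intro Hv. destruct s as [a L]. unfold act_t; simpl.
  destruct L as [|[e r1] L'].
  - apply valid_push; auto. simpl. intros [_ [r [L' H]]]. discriminate.
  - destruct (isone (rep b a) && Bool.eqb e (negb b)) eqn:E.
    + eapply valid_tail; eauto.
    + apply valid_push; auto. simpl. intros [H1 [r [L'' H2]]]. injection H2; intros; subst.
      apply isone_iff in H1. rewrite H1 in E. rewrite Bool.eqb_reflx in E. discriminate.
Qed.

Lemma valid_act_letter l s : valid s -> valid (act_letter l s).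
Proof. destruct l; simpl; auto using valid_act_t. Qed.

Lemma valid_act u s : valid s -> valid (act u s).
Proof. induction u; simpl; auto using valid_act_letter. Qed.

Lemma isone1 : isone 1 = true.
Proof. apply isone_iff. reflexivity. Qed.

Lemma rep_lead b x : rep (negb b) (lead b x) = 1.
Proof. apply rep_one. apply lead_in. Qed.

Lemma lead_lead b x : lead (negb b) (lead b x) = x * ginv (rep b x).
Proof.
  rewrite (lead_psi (negb b) (lead b x)), rep_lead, ginv1, gmul1r.
  rewrite lead_psi. apply psi_inv. apply rep_spec.
Qed.

Lemma act_t_push b s : act_t (negb b) (push b s) = s.
Proof.
  destruct s as [a L]. unfold act_t, push; simpl.
  rewrite rep_lead, isone1, negb_involutive, Bool.eqb_reflx. simpl.
  rewrite lead_lead, gmulKV. reflexivity.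
Qed.

Lemma act_tt b s : valid s -> act_t (negb b) (act_t b s) = s.
Proof.
  intro Hv. destruct s as [a L]. unfold act_t at 2; simpl.
  destruct L as [|[e r1] L'].
  - apply act_t_push.
  - destruct (isone (rep b a) && Bool.eqb e (negb b)) eqn:E; [|apply act_t_push].
    apply andb_true_iff in E. destruct E as [E1 E2]. apply isone_iff in E1.
    apply Bool.eqb_prop in E2. subst e.
    destruct Hv as [HF HN]. inversion HF; subst. simpl in H1.
    unfold act_t; simpl.
    assert (Hr : rep (negb b) (lead b a * r1) = r1).
    { rewrite rep_mulH; auto. apply lead_in. }
    rewrite Hr.
    assert (Hl : lead (negb b) (lead b a * r1) = a).
    { rewrite lead_psi, Hr, gmulKr, lead_psi, E1, ginv1, gmul1r. apply psi_inv.
      apply rep_one; auto. }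
    destruct L' as [|[e2 r2] L''].
    + unfold push; simpl. rewrite Hr, Hl. reflexivity.
    + destruct (isone r1 && Bool.eqb e2 (negb (negb b))) eqn:E.
      * exfalso. apply andb_true_iff in E. destruct E as [E3 E4]. apply isone_iff in E3.
        apply Bool.eqb_prop in E4. simpl in HN. destruct HN as [HN _].
        apply HN; auto. rewrite E4. destruct b; simpl; discriminate.
      * unfold push; simpl. rewrite Hr, Hl. reflexivity.
Qed.

Lemma act_conj c s : C c -> valid s ->
  act_t false (act_letter (LA (phi c)) (act_t true s)) = act_letter (LA c) s.
Proof.
  intros Hc Hv. destruct s as [a L].
  assert (Hpush : act_t false (act_letter (LA (phi c)) (push true (a, L))) = (c * a, L)).
  { unfold push, act_letter, act_t; simpl.
    assert (Hh : C (a * ginv (rep true a))) by apply (rep_spec true).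
    rewrite <- phiM by auto.
    assert (Hr : rep false (phi (c * (a * ginv (rep true a)))) = 1).
    { apply rep_one. exists (c * (a * ginv (rep true a))). split; auto. apply CM; auto. }
    rewrite Hr, isone1. simpl.
    rewrite ginv1, gmul1r, phinv_phi by (apply CM; auto).
    rewrite <- gmulA, gmulKV. reflexivity. }
  unfold act_t at 2; cbn [snd fst].
  destruct L as [|[e r1] L'].
  - exact Hpush.
  - destruct (isone (rep true a) && Bool.eqb e (negb true)) eqn:E; [|exact Hpush].
    apply andb_true_iff in E. destruct E as [E1 E2]. apply isone_iff in E1.
    apply Bool.eqb_prop in E2. simpl in E2. subst e.
    assert (Ha : C a) by (apply (rep_one true); auto).
    destruct Hv as [HF HN]. inversion HF; subst. simpl in H1.
    unfold act_letter. cbn [fst snd].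
    assert (Hl1 : lead true a = phi a).
    { rewrite lead_psi, E1, ginv1, gmul1r. reflexivity. }
    rewrite Hl1, gmulA, <- phiM by auto.
    assert (Hin : inH false (phi (c * a))). { exists (c * a). split; auto. apply CM; auto. }
    assert (Hr : rep false (phi (c * a) * r1) = r1). { rewrite rep_mulH; auto. }
    unfold act_t; cbn [fst snd]. rewrite Hr.
    assert (Hl : lead false (phi (c * a) * r1) = c * a).
    { rewrite lead_psi, Hr, gmulKr. simpl. apply phinv_phi. apply CM; auto. }
    destruct L' as [|[e2 r2] L''].
    + unfold push; cbn [fst snd]. rewrite Hr, Hl. reflexivity.
    + destruct (isone r1 && Bool.eqb e2 (negb false)) eqn:E.
      * exfalso. apply andb_true_iff in E. destruct E as [E3 E4]. apply isone_iff in E3.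
        apply Bool.eqb_prop in E4. simpl in HN. destruct HN as [HN _].
        apply HN; auto. rewrite E4. discriminate.
      * unfold push; cbn [fst snd]. rewrite Hr, Hl. reflexivity.
Qed.

Lemma act_inv u v s : hnn_eq A C phi u v -> valid s -> act u s = act v s.
Proof.
  intro H. revert s. induction H; intros s Hs.
  - reflexivity.
  - symmetry. auto.
  - rewrite IHhnn_eq1, IHhnn_eq2; auto.
  - rewrite !act_app. f_equal. apply IHhnn_eq. apply valid_act. auto.
  - destruct s; simpl. rewrite gmul1. reflexivity.
  - destruct s; simpl. rewrite gmulA. reflexivity.
  - simpl. apply (act_tt false). auto.
  - simpl. apply (act_tt true). auto.
  - simpl. symmetry. apply act_conj; auto.
Qed.

End HNN.
Section Scan.
Variable A : Grp.
Variable C : A -> Prop.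
Variable phi : A -> A.
Hypothesis HC : is_subgroup A C.
Hypothesis Hphi : is_inj_hom A C phi.

Notation "x * y" := (gmul x y).
Notation rep := (rep A C phi).
Notation lead := (lead A C phi).
Notation act := (act A C phi).
Notation act_t := (act_t A C phi).
Notation push := (push A C phi).
Notation state := (state A).

Definition Init : state := (gone, []).
Definition ht (s : state) := length (snd s).
Definition bot (L : nat) (s : state) := skipn (ht s - L) (snd s).
Definition tl (b : bool) : letter A := if b then LT else LTi.

Fixpoint tsigns (u : list (letter A)) : list bool :=
  match u with
  | [] => []
  | LT :: u' => true :: tsigns u'
  | LTi :: u' => false :: tsigns u'
  | LA _ :: u' => tsigns u'
  end.
Fixpoint nA (u : list (letter A)) : nat :=
  match u with [] => 0 | LA _ :: u' => S (nA u') | _ :: u' => nA u' end.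
Definition nt u := length (tsigns u).

Lemma len_split u : length u = nt u + nA u.
Proof. unfold nt. induction u as [|[] u IH]; simpl; lia. Qed.

Lemma tsigns_app u v : tsigns (u ++ v) = tsigns u ++ tsigns v.
Proof. induction u as [|[] u IH]; simpl; try rewrite IH; reflexivity. Qed.
Lemma nA_app u v : nA (u ++ v) = nA u + nA v.
Proof. induction u as [|[] u IH]; simpl; try rewrite IH; reflexivity. Qed.
Lemma nt_app u v : nt (u ++ v) = nt u + nt v.
Proof. unfold nt. rewrite tsigns_app, length_app. reflexivity. Qed.

Definition popcond (b : bool) (s : state) : Prop :=
  rep b (fst s) = gone /\ exists r L', snd s = (negb b, r) :: L'.

Lemma act_t_cases b s :
  (exists r, snd s = (negb b, r) :: snd (act_t b s) /\ rep b (fst s) = gone) \/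
  (act_t b s = push b s /\ ~ popcond b s).
Proof.
  destruct s as [a L]. unfold act_t; cbn [fst snd].
  destruct L as [|[e r1] L'].
  - right. split; auto. intros [_ [r [L' H]]]. discriminate.
  - destruct (isone A (rep b a) && Bool.eqb e (negb b)) eqn:E.
    + left. apply andb_true_iff in E. destruct E as [E1 E2]. apply isone_iff in E1.
      apply Bool.eqb_prop in E2. subst e. exists r1. auto.
    + right. split; auto. intros [H1 [r [L'' H2]]]. cbn [fst snd] in *. injection H2; intros; subst.
      apply (isone_iff A) in H1. rewrite H1 in E. rewrite Bool.eqb_reflx in E. discriminate.
Qed.

Lemma act_tl b v s : act (tl b :: v) s = act_t b (act v s).
Proof. destruct b; reflexivity. Qed.

Lemma skipn_cons_S {X} p (l l' : list X) x : skipn p l = x :: l' -> skipn (S p) l = l' /\ p < length l.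
Proof.
  revert l. induction p; intros l H.
  - simpl in H. subst. simpl. split; auto. lia.
  - destruct l; simpl in H. discriminate. destruct (IHp l H). split; auto. simpl. lia.
Qed.

Lemma Qp b j s : exists Q p, snd (act (repeat (tl b) j) s) = Q ++ skipn p (snd s) /\
  Forall (fun x => fst x = b) Q /\ length Q + p = j /\ p <= length (snd s) /\
  (p = 0 \/ exists r rest, snd s = (negb b, r) :: rest).
Proof.
  induction j as [|j IH].
  - exists [], 0. simpl. repeat split; auto. lia.
  - destruct IH as [Q [p [H1 [H2 [H3 [H4 H5]]]]]].
    simpl repeat. rewrite act_tl.
    destruct (act_t_cases b (act (repeat (tl b) j) s)) as [[r [E1 E2]] | [E1 E2]].
    + rewrite H1 in E1. destruct Q as [|y Q'].
      * simpl in E1. destruct (skipn_cons_S _ _ _ _ E1) as [E3 E4].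
        exists [], (S p). rewrite app_nil_l, E3. split; auto. split; auto. split. simpl in *; lia.
        split. lia.
        right. destruct p.
        -- simpl in E1. exists r, (snd (act_t b (act (repeat (tl b) j) s))). auto.
        -- destruct H5 as [H5|H5]. lia. exact H5.
      * exfalso. simpl in E1. injection E1; intros Ea Eb. subst y. inversion H2 as [|? ? Hy].
        simpl in Hy. destruct b; simpl in Hy; discriminate.
    + rewrite E1. unfold push. simpl snd. rewrite H1.
      exists ((b, rep b (fst (act (repeat (tl b) j) s))) :: Q), p. simpl. repeat split; auto.
Qed.

Lemma repeat_fix b j s : snd (act (repeat (tl b) j) s) = snd s -> j = 0.
Proof.
  intro H. destruct (Qp b j s) as [Q [p [H1 [H2 [H3 [H4 H5]]]]]].
  rewrite H1 in H. assert (Hl : length Q = p).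
  { apply (f_equal (@length _)) in H. rewrite length_app, length_skipn in H. lia. }
  destruct H5 as [H5 | [r [rest H5]]]. lia.
  destruct Q as [|y Q']. simpl in Hl, H3. lia.
  rewrite H5 in H. simpl in H. injection H; intros _ Hy.
  inversion H2 as [|? ? Hyb]. rewrite Hy in Hyb. simpl in Hyb. destruct b; discriminate.
Qed.

Lemma hctx_l x u v : hnn_eq A C phi u v -> hnn_eq A C phi (x ++ u) (x ++ v).
Proof.
  intro H. pose proof (he_ctx A C phi x u v [] H) as H'. rewrite !app_nil_r in H'. exact H'.
Qed.

Lemma hctx_r u v y : hnn_eq A C phi u v -> hnn_eq A C phi (u ++ y) (v ++ y).
Proof.
  intro H. exact (he_ctx A C phi [] u v y H).
Qed.

Lemma pure_t_rep q : nA q = 0 -> exists b j, hnn_eq A C phi q (repeat (tl b) j).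
Proof.
  induction q as [|l q IH]; intro H.
  - exists true, 0. apply he_refl.
  - assert (Hl : exists c, l = tl c) by (destruct l as [| |x]; simpl in H; try discriminate;
      [exists true | exists false]; reflexivity).
    destruct Hl as [c Hc]. subst l.
    assert (H' : nA q = 0) by (destruct c; exact H).
    destruct (IH H') as [b [j Hj]].
    assert (H1 : hnn_eq A C phi (tl c :: q) (tl c :: repeat (tl b) j)) by exact (hctx_l [tl c] _ _ Hj).
    destruct (Bool.bool_dec c b) as [E|E].
    + subst c. exists b, (S j). exact H1.
    + destruct j as [|j].
      * exists c, (S O). exact H1.
      * exists b, j. eapply he_trans. exact H1.
        simpl. change (hnn_eq A C phi ([tl c; tl b] ++ repeat (tl b) j) ([] ++ repeat (tl b) j)).
        apply hctx_r. destruct c, b; try congruence; simpl; [apply he_tti | apply he_tit].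
Qed.

Lemma fix_pure q s : valid A C phi s -> nA q = 0 -> snd (act q s) = snd s -> act q s = s.
Proof.
  intros Hv Hq Hs. destruct (pure_t_rep q Hq) as [b [j Hj]].
  rewrite (act_inv A C phi HC Hphi _ _ _ Hj Hv) in *.
  pose proof (repeat_fix b j s Hs). subst j. reflexivity.
Qed.

Lemma valid_Init : valid A C phi Init.
Proof. unfold valid, validL, Init; simpl. split; auto. Qed.

Section Fin.
Variable Efin : list (bool * gcar A).

Definition Inv (v : list (letter A)) (L : nat) : Prop :=
  L <= ht (act v Init) /\ exists Y, Efin = Y ++ bot L (act v Init).

Definition Surv (l : letter A) (v : list (letter A)) (L : nat) : Prop :=
  exists b, l = tl b /\ act (l :: v) Init = push b (act v Init) /\ ~ popcond b (act v Init) /\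
    ht (act (l :: v) Init) = L /\ 1 <= L /\ Inv v (L - 1) /\
    exists Y, Efin = Y ++ snd (act (l :: v) Init).

Lemma bot_full L s : ht s = L -> bot L s = snd s.
Proof. intro H. unfold bot. replace (ht s - L) with 0 by lia. reflexivity. Qed.

Lemma act_cons l v s : act (l :: v) s = act_letter A C phi l (act v s).
Proof. reflexivity. Qed.

Lemma H_pop (s s' : state) x L : snd s' = x :: snd s -> L <= ht s -> L <= ht s' /\ bot L s' = bot L s.
Proof.
  intros H1 H2. unfold bot, ht in *. rewrite H1 in *. simpl length.
  split. lia. replace (S (length (snd s)) - L) with (S (length (snd s) - L)) by lia. reflexivity.
Qed.

Lemma H_push (s s' : state) y L : snd s = y :: snd s' -> L <= ht s -> ht s <> L -> L <= ht s' /\ bot L s = bot L s'.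
Proof.
  intros H1 H2 H3. unfold bot, ht in *. rewrite H1 in *. simpl length in *.
  split. lia. replace (S (length (snd s')) - L) with (S (length (snd s') - L)) by lia. reflexivity.
Qed.

Lemma step_t b v L : Inv (tl b :: v) L ->
  Surv (tl b) v L \/ (Inv v L /\ bot L (act (tl b :: v) Init) = bot L (act v Init)).
Proof.
  intros [HL [Y HY]].
  assert (Hs : act (tl b :: v) Init = act_t b (act v Init)) by (destruct b; reflexivity).
  destruct (act_t_cases b (act v Init)) as [[r [H1 H2]] | [H1 H2]].
  - right. rewrite Hs in *. destruct (H_pop _ _ _ L H1 HL) as [Ha Hb].
    split. split; auto. exists Y. rewrite Hb. auto. auto.
  - rewrite H1 in Hs.
    destruct (Nat.eq_dec (ht (act (tl b :: v) Init)) L) as [E|E].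
    + left. exists b. split; auto. split; auto. split; auto.
      assert (Hht : ht (act (tl b :: v) Init) = S (ht (act v Init))) by (rewrite Hs; reflexivity).
      split; auto. split. lia. split.
      * split. lia. exists (Y ++ [(b, rep b (fst (act v Init)))]).
        rewrite bot_full by lia. rewrite HY, bot_full by auto. rewrite Hs. simpl. rewrite <- app_assoc. reflexivity.
      * exists Y. rewrite HY, bot_full; auto.
    + right. assert (Hp : snd (act (tl b :: v) Init) = (b, rep b (fst (act v Init))) :: snd (act v Init))
        by (rewrite Hs; reflexivity).
      destruct (H_push _ _ _ L Hp HL E) as [Ha Hb]. split; auto. split; auto. exists Y. rewrite <- Hb. auto.
Qed.

Lemma step l v L : Inv (l :: v) L ->
  Surv l v L \/ (Inv v L /\ bot L (act (l :: v) Init) = bot L (act v Init)).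
Proof.
  intro H. destruct l as [| |x].
  - apply (step_t true). exact H.
  - apply (step_t false). exact H.
  - right. destruct H as [HL [Y HY]].
    assert (Hb : bot L (act (LA x :: v) Init) = bot L (act v Init)) by reflexivity.
    split; auto. split. exact HL. exists Y. rewrite <- Hb. auto.
Qed.

Lemma Inv_nil L : Inv [] L -> L = 0.
Proof. intros [H _]. unfold ht in H. simpl in H. lia. Qed.

Lemma tcount v L : Inv v L -> L <= nt v.
Proof.
  revert L. induction v as [|l v IH]; intros L H.
  - apply Inv_nil in H. lia.
  - destruct (step l v L H) as [[b [Hl [_ [_ [_ [HL1 [Hinv _]]]]]]] | [Hinv _]].
    + subst l. specialize (IH _ Hinv). unfold nt. destruct b; simpl; unfold nt in IH; lia.
    + specialize (IH _ Hinv). unfold nt in *. destruct l; simpl; lia.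
Qed.

Lemma prefix a b L : Inv (a ++ b) L -> exists L', Inv b L' /\ L <= nt a + L' /\
  (nt a + L' = L -> exists P, snd (act (a ++ b) Init) = P ++ snd (act b Init) /\ map fst P = tsigns a) /\
  (nt a + L' = L -> 1 <= nt a -> ht (act (a ++ b) Init) = L).
Proof.
  revert L. induction a as [|l a IH]; intros L H.
  - exists L. simpl. split; auto. split; auto. split.
    + intros _. exists []. auto.
    + unfold nt; simpl; lia.
  - simpl app in H. destruct (step l (a ++ b) L H) as [Hs | [Hinv Hbot]].
    + destruct Hs as [b0 [Hl [Hpush [Hnp [Hht [HL1 [Hinv _]]]]]]].
      destruct (IH _ Hinv) as [L' [H1 [H2 [H3 H4]]]].
      assert (Hnt : nt (l :: a) = S (nt a)) by (subst l; destruct b0; reflexivity).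
      exists L'. split; auto. rewrite Hnt. split. lia. split.
      * intro E. destruct (H3 ltac:(lia)) as [P [HP1 HP2]].
        exists ((b0, rep b0 (fst (act (a ++ b) Init))) :: P). simpl app. rewrite Hpush. simpl.
        rewrite HP1. split; auto. simpl. rewrite HP2. subst l. destruct b0; reflexivity.
      * intros _ _. exact Hht.
    + destruct (IH _ Hinv) as [L' [H1 [H2 [H3 H4]]]].
      exists L'. split; auto. destruct l as [| |x].
      * unfold nt in *; simpl in *. split. lia. split; intros; lia.
      * unfold nt in *; simpl in *. split. lia. split; intros; lia.
      * assert (Hnt : nt (LA x :: a) = nt a) by reflexivity. rewrite Hnt. split; auto.
Qed.

Lemma block u b L : ~ (exists X Z, map fst Efin = X ++ tsigns u ++ Z) -> 1 <= nt u ->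
  Inv (u ++ b) L -> exists L', Inv b L' /\ L + 1 <= nt u + L'.
Proof.
  intros Hni Hnt H. destruct (prefix u b L H) as [L' [H1 [H2 [H3 H4]]]].
  exists L'. split; auto.
  destruct (Nat.eq_dec (nt u + L') L) as [E|E]; [|lia].
  exfalso. apply Hni. destruct (H3 E) as [P [HP1 HP2]]. specialize (H4 E Hnt).
  destruct H as [_ [Y HY]]. rewrite bot_full in HY by auto. rewrite HP1 in HY.
  exists (map fst Y), (map fst (snd (act b Init))). rewrite HY, !map_app, HP2. reflexivity.
Qed.

Lemma blocks u xs L : ~ (exists X Z, map fst Efin = X ++ tsigns u ++ Z) -> 1 <= nt u ->
  Inv (concat (map (fun x => u ++ x) xs)) L -> L + length xs <= nt (concat (map (fun x => u ++ x) xs)).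
Proof.
  intros Hni Hnt. revert L. induction xs as [|x xs IH]; intros L H.
  - simpl in *. apply Inv_nil in H. lia.
  - simpl in *. rewrite <- app_assoc in H.
    destruct (block u _ L Hni Hnt H) as [L1 [H1 H2]].
    destruct (prefix x _ L1 H1) as [L2 [H3 [H4 _]]].
    specialize (IH L2 H3). rewrite !nt_app. lia.
Qed.

Lemma tcount_blocks u x0 xs L : ~ (exists X Z, map fst Efin = X ++ tsigns u ++ Z) -> 1 <= nt u ->
  Inv (x0 ++ concat (map (fun x => u ++ x) xs)) L -> L + length xs <= nt (x0 ++ concat (map (fun x => u ++ x) xs)).
Proof.
  intros Hni Hnt H. destruct (prefix x0 _ L H) as [L1 [H1 [H2 _]]].
  pose proof (blocks u xs L1 Hni Hnt H1). rewrite nt_app. lia.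
Qed.

Fixpoint tw (l : list bool) : nat :=
  match l with
  | [] => 0
  | x :: l' => (match l' with [] => 1 | y :: _ => if Bool.eqb x y then 0 else 1 end) + tw l'
  end.

Definition Pend (v : list (letter A)) (L : nat) : Prop :=
  exists Y q b Z, Y = act q (act v Init) /\ nA q = 0 /\ snd Y = bot L (act v Init) /\
    Efin = Z ++ (b, rep b (fst Y)) :: snd Y /\ ~ popcond b Y /\
    (snd Y = [] \/ exists r rest, snd Y = (negb b, r) :: rest).

Hypothesis HLast : forall Z x, Efin = Z ++ [x] -> snd x <> gone.

Lemma popcond_push b s : popcond (negb b) (push b s).
Proof.
  unfold popcond, push; simpl. split. apply (rep_lead A C phi HC Hphi). exists (rep b (fst s)), (snd s).
  rewrite negb_involutive. reflexivity.
Qed.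

Lemma acount v L (p : bool) : Inv v L -> (p = true -> Pend v L) ->
  tw (map fst (bot L (act v Init))) + (if p then 1 else 0) <= nA v.
Proof.
  revert L p. induction v as [|l v IH]; intros L p H Hp.
  - pose proof (Inv_nil L H). subst L. destruct p; simpl; [|lia].
    exfalso. destruct (Hp eq_refl) as [Y [q [b [Z [H1 [H2 [H3 [H4 _]]]]]]]].
    assert (HY : Y = Init).
    { rewrite H1 in H3 |- *. apply fix_pure; auto. apply valid_Init. }
    rewrite HY in H4. unfold Init in H4. simpl in H4.
    apply (HLast Z _ H4). simpl. apply (rep_one A C phi HC Hphi). apply (inH1 A C phi HC Hphi).
  - destruct (step l v L H) as [Hs | [Hinv Hbot]].
    + destruct Hs as [b0 [Hl [Hpush [Hnp [Hht [HL1 [Hinv [Yf HYf]]]]]]]].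
      assert (Hp' : p = false).
      { destruct p; auto. exfalso. destruct (Hp eq_refl) as [Y [q [b [Z [H1 [H2 [H3 [H4 [H5 H6]]]]]]]]].
        rewrite bot_full in H3 by auto.
        assert (HY : Y = act (l :: v) Init).
        { rewrite H1 in H3 |- *. apply fix_pure; auto. apply valid_act; auto. apply valid_Init. }
        rewrite HY in H5, H6. rewrite Hpush in H5, H6. unfold push in H6; simpl in H6.
        destruct H6 as [H6 | [r [rest H6]]]. discriminate. injection H6; intros _ _ Eb.
        apply H5. subst b0. rewrite <- (negb_involutive b) at 1. apply popcond_push. }
      subst p.
      set (s' := act v Init) in *.
      set (p' := match map fst (snd s') with [] => true | y :: _ => negb (Bool.eqb b0 y) end).
      assert (Hht' : ht s' = L - 1). { unfold ht in *. rewrite Hpush in Hht. simpl in Hht. lia. }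
      specialize (IH (L - 1) p' Hinv).
      rewrite bot_full in IH by auto. rewrite bot_full by auto.
      assert (Hnv : nA (l :: v) = nA v) by (subst l; destruct b0; reflexivity).
      rewrite Hnv. rewrite Hpush. unfold push. simpl snd. simpl map.
      assert (Htw : tw (b0 :: map fst (snd s')) = (if p' then 1 else 0) + tw (map fst (snd s'))).
      { unfold p'. simpl. destruct (map fst (snd s')); auto. destruct (Bool.eqb b0 b); reflexivity. }
      rewrite Htw. enough (tw (map fst (snd s')) + (if p' then 1 else 0) <= nA v) by lia.
      apply IH. intro Ep'. exists s', [], b0, Yf. split; auto. split; auto. split.
      { rewrite bot_full; auto. } split.
      { rewrite HYf, Hpush. reflexivity. } split; auto.
      unfold p' in Ep'. destruct (snd s') as [|[e r] rest]; auto. right. exists r, rest. f_equal. f_equal.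
      simpl in Ep'. destruct b0, e; simpl in *; congruence.
    + destruct l as [| |x].
      * specialize (IH L p Hinv). rewrite Hbot. apply IH.
        intro Ep. destruct (Hp Ep) as [Y [q [b [Z [H1 [H2 [H3 [H4 [H5 H6]]]]]]]]].
        exists Y, (q ++ [LT]), b, Z. split. rewrite H1, act_app. reflexivity.
        split. rewrite nA_app, H2. reflexivity. split. rewrite H3, Hbot. reflexivity. auto.
      * specialize (IH L p Hinv). rewrite Hbot. apply IH.
        intro Ep. destruct (Hp Ep) as [Y [q [b [Z [H1 [H2 [H3 [H4 [H5 H6]]]]]]]]].
        exists Y, (q ++ [LTi]), b, Z. split. rewrite H1, act_app. reflexivity.
        split. rewrite nA_app, H2. reflexivity. split. rewrite H3, Hbot. reflexivity. auto.
      * specialize (IH L false Hinv). rewrite Hbot. simpl nA.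
        assert (tw (map fst (bot L (act v Init))) + 0 <= nA v) by (apply IH; discriminate).
        destruct p; lia.
Qed.

Lemma Inv_top v : snd (act v Init) = Efin -> Inv v (length Efin).
Proof.
  intro H. split. unfold ht. rewrite H. auto. exists []. rewrite bot_full. rewrite H. reflexivity.
  unfold ht. rewrite H. reflexivity.
Qed.

Lemma lower v : snd (act v Init) = Efin -> length Efin + tw (map fst Efin) <= length v.
Proof.
  intro H. pose proof (Inv_top v H) as HI. pose proof (tcount v _ HI).
  pose proof (acount v _ false HI ltac:(discriminate)) as HA.
  rewrite bot_full in HA by (unfold ht; rewrite H; auto). rewrite H in HA.
  rewrite len_split. lia.
Qed.

Lemma lower_blocks u x0 xs : ~ (exists X Z, map fst Efin = X ++ tsigns u ++ Z) -> 1 <= nt u ->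
  snd (act (x0 ++ concat (map (fun x => u ++ x) xs)) Init) = Efin ->
  length Efin + length xs + tw (map fst Efin) <= length (x0 ++ concat (map (fun x => u ++ x) xs)).
Proof.
  intros Hni Hnt H. pose proof (Inv_top _ H) as HI. pose proof (tcount_blocks u x0 xs _ Hni Hnt HI).
  pose proof (acount _ _ false HI ltac:(discriminate)) as HA.
  rewrite bot_full in HA by (unfold ht; rewrite H; auto). rewrite H in HA.
  rewrite (len_split (x0 ++ _)). lia.
Qed.

End Fin.
End Scan.
Section Comp.
Variable A : Grp.
Variable C : A -> Prop.
Variable phi : A -> A.
Hypothesis HC : is_subgroup A C.
Hypothesis Hphi : is_inj_hom A C phi.

Notation "x * y" := (gmul x y).
Notation rep := (rep A C phi).
Notation lead := (lead A C phi).
Notation act := (act A C phi).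
Notation act_t := (act_t A C phi).
Notation push := (push A C phi).
Notation inH := (inH A C phi).
Notation tl := (tl A).
Notation Init := (Init A).

Lemma repeat_S_r {X} (x : X) n : repeat x (S n) = repeat x n ++ [x].
Proof. induction n; simpl; auto. rewrite <- IHn. reflexivity. Qed.

Lemma notH_mul b x y : ~ inH b x -> inH b y -> ~ inH b (x * y).
Proof.
  intros Hx Hy Hxy. apply Hx. rewrite <- (gmulKr A x y). apply (inHM A C phi HC Hphi); auto.
  apply (inHV A C phi HC Hphi); auto.
Qed.

Lemma notH_inv b x : ~ inH b x -> ~ inH b (ginv x).
Proof.
  intros Hx H. apply Hx. rewrite <- (ginvK A x). apply (inHV A C phi HC Hphi); auto.
Qed.

Lemma push_run b k s : (exists r rest, snd s = (b, r) :: rest) -> inH (negb b) (fst s) ->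
  exists E, snd (act (repeat (tl b) k) s) = E ++ snd s /\ map fst E = repeat b k /\
    inH (negb b) (fst (act (repeat (tl b) k) s)) /\
    (exists r rest, snd (act (repeat (tl b) k) s) = (b, r) :: rest).
Proof.
  intros Htop Hin. induction k as [|k IH].
  - exists []. simpl. auto.
  - destruct IH as [E [H1 [H2 [H3 [r [rest H4]]]]]].
    simpl repeat. rewrite act_tl.
    destruct (act_t_cases A C phi b (act (repeat (tl b) k) s)) as [[r' [E1 E2]] | [E1 E2]].
    + exfalso. rewrite H4 in E1. injection E1; intros. destruct b; discriminate.
    + rewrite E1. unfold push; simpl. exists ((b, rep b (fst (act (repeat (tl b) k) s))) :: E).
      rewrite H1. simpl. rewrite H2. split; auto. split; auto. split.
      apply (lead_in A C phi HC Hphi). eauto.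
Qed.

Lemma seg b k x s : 1 <= k -> ~ inH b (x * fst s) ->
  exists E, snd (act (repeat (tl b) k) (act [LA x] s)) = E ++ snd s /\ map fst E = repeat b k /\
    inH (negb b) (fst (act (repeat (tl b) k) (act [LA x] s))) /\
    exists E', E = E' ++ [(b, rep b (x * fst s))] /\ rep b (x * fst s) <> gone.
Proof.
  intros Hk Hn. destruct k as [|k]. lia.
  rewrite repeat_S_r.
  rewrite act_app.
  assert (Hs1 : act [tl b] (act [LA x] s) = push b (x * fst s, snd s)).
  { change (act [tl b] (act [LA x] s)) with (act_letter A C phi (tl b) (x * fst s, snd s)).
    assert (Ht : act_letter A C phi (tl b) (x * fst s, snd s) = act_t b (x * fst s, snd s)) by (destruct b; reflexivity).
    rewrite Ht.
    destruct (act_t_cases A C phi b (x * fst s, snd s)) as [[r' [E1 E2]] | [E1 E2]].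
    - exfalso. apply Hn. apply (rep_one A C phi HC Hphi). exact E2.
    - exact E1. }
  rewrite Hs1.
  destruct (push_run b k (push b (x * fst s, snd s))) as [E [H1 [H2 [H3 H4]]]].
  { unfold push; simpl. eauto. }
  { unfold push; simpl. apply (lead_in A C phi HC Hphi). }
  exists (E ++ [(b, rep b (x * fst s))]). split.
  { rewrite H1. unfold push. simpl. rewrite <- app_assoc. reflexivity. }
  split. { rewrite map_app, H2. simpl. symmetry. apply repeat_S_r. }
  split. exact H3.
  exists E. split; auto. intro E0. apply Hn. apply (rep_one A C phi HC Hphi). exact E0.
Qed.

Lemma tsigns_rep b k : tsigns A (repeat (tl b) k) = repeat b k.
Proof. induction k; simpl; auto. rewrite IHk. destruct b; reflexivity. Qed.

Lemma tp_tl k : tp A k = repeat (tl true) k. Proof. reflexivity. Qed.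
Lemma tn_tl k : tn A k = repeat (tl false) k. Proof. reflexivity. Qed.

Lemma pow10_pos i : 1 <= 10 ^ i.
Proof. pose proof (Nat.pow_nonzero 10 i ltac:(lia)). lia. Qed.

Variables g h : A.
Hypothesis Hg : ~ inH true g.
Hypothesis Hh : ~ inH false h.

Lemma w_eq i : let K := 10 ^ i in w_i A g h i =
  repeat (tl true) K ++ [LA g] ++ repeat (tl false) K ++ [LA h] ++
  repeat (tl true) K ++ [LA (ginv g)] ++ repeat (tl false) K ++ [LA (ginv h)] ++
  repeat (tl true) (2 * K) ++ [LA g] ++ repeat (tl false) (2 * K) ++ [LA h] ++
  repeat (tl true) (3 * K) ++ [LA (ginv g)] ++ repeat (tl false) (3 * K) ++ [LA (ginv h)].
Proof. reflexivity. Qed.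

Lemma tsigns_w i : let K := 10 ^ i in tsigns A (w_i A g h i) =
  repeat true K ++ repeat false K ++ repeat true K ++ repeat false K ++
  repeat true (2 * K) ++ repeat false (2 * K) ++ repeat true (3 * K) ++ repeat false (3 * K).
Proof.
  intro K. rewrite w_eq. rewrite !(tsigns_app A), !tsigns_rep. simpl. rewrite app_nil_r. reflexivity.
Qed.

Lemma w_act i s : inH false (fst s) ->
  exists E, snd (act (w_i A g h i) s) = E ++ snd s /\ map fst E = tsigns A (w_i A g h i) /\
    inH false (fst (act (w_i A g h i) s)) /\ exists E' r, E = E' ++ [(false, r)] /\ r <> gone.
Proof.
  intro Hs. rewrite tsigns_w. rewrite w_eq. set (K := 10 ^ i).
  assert (HK : 1 <= K) by apply pow10_pos.
  rewrite !act_app.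
  assert (Hgi : ~ inH true (ginv g)) by (apply notH_inv; auto).
  assert (Hhi : ~ inH false (ginv h)) by (apply notH_inv; auto).
  destruct (seg false (3 * K) (ginv h) s ltac:(lia) (notH_mul _ _ _ Hhi Hs)) as [E8 [H8a [H8b [H8c [E8' [H8d H8e]]]]]].
  set (s8 := act (repeat (tl false) (3 * K)) (act [LA (ginv h)] s)) in *.
  destruct (seg true (3 * K) (ginv g) s8 ltac:(lia) (notH_mul _ _ _ Hgi H8c)) as [E7 [H7a [H7b [H7c _]]]].
  set (s7 := act (repeat (tl true) (3 * K)) (act [LA (ginv g)] s8)) in *.
  destruct (seg false (2 * K) h s7 ltac:(lia) (notH_mul _ _ _ Hh H7c)) as [E6 [H6a [H6b [H6c _]]]].
  set (s6 := act (repeat (tl false) (2 * K)) (act [LA h] s7)) in *.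
  destruct (seg true (2 * K) g s6 ltac:(lia) (notH_mul _ _ _ Hg H6c)) as [E5 [H5a [H5b [H5c _]]]].
  set (s5 := act (repeat (tl true) (2 * K)) (act [LA g] s6)) in *.
  destruct (seg false K (ginv h) s5 ltac:(lia) (notH_mul _ _ _ Hhi H5c)) as [E4 [H4a [H4b [H4c _]]]].
  set (s4 := act (repeat (tl false) K) (act [LA (ginv h)] s5)) in *.
  destruct (seg true K (ginv g) s4 ltac:(lia) (notH_mul _ _ _ Hgi H4c)) as [E3 [H3a [H3b [H3c _]]]].
  set (s3 := act (repeat (tl true) K) (act [LA (ginv g)] s4)) in *.
  destruct (seg false K h s3 ltac:(lia) (notH_mul _ _ _ Hh H3c)) as [E2 [H2a [H2b [H2c _]]]].
  set (s2 := act (repeat (tl false) K) (act [LA h] s3)) in *.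
  destruct (seg true K g s2 ltac:(lia) (notH_mul _ _ _ Hg H2c)) as [E1 [H1a [H1b [H1c _]]]].
  set (s1 := act (repeat (tl true) K) (act [LA g] s2)) in *.
  exists (E1 ++ E2 ++ E3 ++ E4 ++ E5 ++ E6 ++ E7 ++ E8). split.
  { rewrite H1a, H2a, H3a, H4a, H5a, H6a, H7a, H8a. rewrite !app_assoc. reflexivity. }
  split. { rewrite !map_app. rewrite H1b, H2b, H3b, H4b, H5b, H6b, H7b, H8b. reflexivity. }
  split. exact H1c.
  exists (E1 ++ E2 ++ E3 ++ E4 ++ E5 ++ E6 ++ E7 ++ E8'), (rep false (ginv h * fst s)). split; auto.
  rewrite H8d. rewrite !app_assoc. reflexivity.
Qed.

Definition LastOK (E : list (bool * gcar A)) : Prop := forall Z x, E = Z ++ [x] -> snd x <> gone.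

Lemma LastOK_app X Y : Y <> [] -> LastOK Y -> LastOK (X ++ Y).
Proof.
  intros Hne HY Z x E. destruct (exists_last Hne) as [Y' [y Hy]]. subst Y.
  rewrite app_assoc in E. apply app_inj_tail in E. destruct E as [_ E]. subst x.
  apply (HY Y'). reflexivity.
Qed.

Lemma wpow_act i n : exists E, snd (act (wpow _ (w_i A g h i) n) Init) = E /\
  map fst E = concat (repeat (tsigns A (w_i A g h i)) n) /\
  inH false (fst (act (wpow _ (w_i A g h i) n) Init)) /\ (1 <= n -> LastOK E).
Proof.
  induction n as [|n IH].
  - exists []. simpl. split; auto. split; auto. split. apply (inH1 A C phi HC Hphi false). lia.
  - destruct IH as [E [H1 [H2 [H3 H4]]]].
    assert (Hw : wpow _ (w_i A g h i) (S n) = w_i A g h i ++ wpow _ (w_i A g h i) n) by reflexivity.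
    rewrite Hw, act_app.
    destruct (w_act i _ H3) as [Ew [Ha [Hb [Hc [Ew' [r [Hd He]]]]]]].
    exists (Ew ++ E). split. rewrite Ha, H1. reflexivity. split.
    { rewrite map_app, Hb, H2. reflexivity. } split. exact Hc.
    intros _. destruct E as [|e E0].
    + rewrite app_nil_r. intros Z x HZ. rewrite Hd in HZ. apply app_inj_tail in HZ.
      destruct HZ as [_ HZ]. subst x. exact He.
    + apply LastOK_app. discriminate. apply H4. destruct n; [|lia].
      simpl in H1. unfold Init in H1. simpl in H1. discriminate.
Qed.

Lemma nA_rep b k : nA A (repeat (tl b) k) = 0.
Proof. induction k; simpl; auto. destruct b; simpl; auto. Qed.

Lemma len_w i : length (w_i A g h i) = (14 * 10 ^ i + 8)%nat.
Proof.
  rewrite (len_split A). unfold nt. rewrite tsigns_w.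
  rewrite w_eq. rewrite !(nA_app A), !nA_rep. simpl nA. rewrite !length_app, !repeat_length. lia.
Qed.

Lemma nt_w i : length (tsigns A (w_i A g h i)) = (14 * 10 ^ i)%nat.
Proof. rewrite tsigns_w. rewrite !length_app, !repeat_length. lia. Qed.

End Comp.
Definition SP (K : nat) : list bool :=
  repeat true K ++ repeat false K ++ repeat true K ++ repeat false K ++
  repeat true (2 * K) ++ repeat false (2 * K) ++ repeat true (3 * K) ++ repeat false (3 * K).

Lemma rep_head {X} (c : X) k l : 1 <= k -> exists l', repeat c k ++ l = c :: l'.
Proof. intro H. destruct k. lia. simpl. eauto. Qed.

Lemma tw_rep b k l : 1 <= k -> tw (repeat b k ++ l) = tw (b :: l).
Proof.
  intro H. induction k as [|k IH]. lia.
  destruct k. reflexivity.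
  change (repeat b (S (S k)) ++ l) with (b :: (repeat b (S k) ++ l)).
  rewrite <- IH by lia. simpl. rewrite Bool.eqb_reflx. reflexivity.
Qed.

Lemma tw_sw b c k l : 1 <= k -> tw (b :: repeat c k ++ l) = (if Bool.eqb b c then 0 else 1) + tw (c :: l).
Proof.
  intro H. destruct k. lia. rewrite <- (tw_rep c (S k) l H). reflexivity.
Qed.

Lemma tw_SP K r : 1 <= K -> tw (SP K ++ r) = 7 + tw (false :: r).
Proof.
  intro HK. unfold SP. rewrite <- !app_assoc.
  rewrite tw_rep by lia.
  rewrite tw_sw by lia. rewrite tw_sw by lia. rewrite tw_sw by lia. rewrite tw_sw by lia.
  rewrite tw_sw by lia. rewrite tw_sw by lia. rewrite tw_sw by lia. simpl. lia.
Qed.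

Lemma tw_F_SP K r : 1 <= K -> tw (false :: SP K ++ r) = 1 + tw (SP K ++ r).
Proof.
  intro HK. unfold SP. rewrite <- !app_assoc. rewrite tw_sw by lia. rewrite (tw_rep true K) by lia.
  reflexivity.
Qed.

Lemma tw_SPn K n : 1 <= K -> tw (concat (repeat (SP K) n)) = 8 * n.
Proof.
  intro HK. induction n as [|n IH]. reflexivity.
  simpl concat. rewrite tw_SP by auto. destruct n as [|n].
  - reflexivity.
  - simpl concat in *. rewrite tw_F_SP by auto. rewrite IH. lia.
Qed.

Lemma RLskip (c : bool) d L x p : (exists z, p = negb c :: z) -> x ++ p = repeat c d ++ L ->
  exists x', x' ++ p = L.
Proof.
  intros [z Hz]. subst p. revert x. induction d as [|d IH]; intros x H.
  - eauto.
  - destruct x as [|e x]; simpl in H; injection H; intros.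
    + destruct c; discriminate.
    + eapply IH; eauto.
Qed.

Lemma RLpre (c : bool) a r y L : (L = [] \/ exists L', L = negb c :: L') ->
  repeat c a ++ y = repeat c r ++ L -> a <= r.
Proof.
  intro HL. revert r. induction a as [|a IH]; intros r H. lia.
  destruct r as [|r].
  - simpl in H. destruct HL as [HL | [L' HL]]; subst L. discriminate.
    injection H; intros. destruct c; discriminate.
  - simpl in H. injection H; intros. apply IH in H0. lia.
Qed.

Lemma RL3 r L x y a : 1 <= a -> (L = [] \/ exists L', L = true :: L') ->
  x ++ repeat false a ++ y = repeat false r ++ L -> a <= r \/ exists x', x' ++ repeat false a ++ y = L.
Proof.
  intros Ha HL. revert x. induction r as [|r IH]; intros x H.
  - right. eauto.
  - destruct x as [|e x].
    + left. simpl in H. eapply (RLpre false); eauto.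
    + simpl in H. injection H; intros H' _. destruct (IH x H') as [H1|H1]; auto.
Qed.

Lemma RLeq a r z z' : repeat false a ++ true :: z = repeat false r ++ true :: z' -> a = r /\ z = z'.
Proof.
  revert r. induction a as [|a IH]; intros [|r] H; simpl in H; try discriminate.
  - injection H; auto.
  - injection H; intros H'. destruct (IH r H'). auto.
Qed.

Lemma RL2 r d L x y a b : 1 <= a -> 1 <= b -> 1 <= d -> (L = [] \/ exists L', L = false :: L') ->
  x ++ repeat false a ++ repeat true b ++ y = repeat false r ++ repeat true d ++ L ->
  (a <= r /\ b <= d) \/ exists x', x' ++ repeat false a ++ repeat true b ++ y = L.
Proof.
  intros Ha Hb Hd HL. revert x. induction r as [|r IH]; intros x H.
  - right. simpl in H. eapply (RLskip true d L x); eauto.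
    destruct a. lia. simpl. eauto.
  - destruct x as [|e x].
    + left. simpl app in H. destruct b as [|b]. lia. destruct d as [|d]. lia.
      simpl repeat in H. rewrite <- !app_comm_cons in H.
      change (false :: repeat false r ++ true :: repeat true d ++ L)
        with (repeat false (S r) ++ true :: repeat true d ++ L) in H.
      apply RLeq in H. destruct H as [H1 H2]. split. lia.
      assert (b <= d) by (eapply (RLpre true); eauto). lia.
    + simpl in H. injection H; intros H' _. destruct (IH x H') as [H1|H1]; auto.
      left. lia.
Qed.

Lemma SP_app K R : SP K ++ R = repeat true K ++ (repeat false K ++ (repeat true K ++ (repeat false K ++
  (repeat true (2 * K) ++ (repeat false (2 * K) ++ (repeat true (3 * K) ++ (repeat false (3 * K) ++ R))))))).
Proof. unfold SP. rewrite <- !app_assoc. reflexivity. Qed.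

Lemma SPn_head K n : 1 <= K -> concat (repeat (SP K) n) = [] \/ exists L', concat (repeat (SP K) n) = true :: L'.
Proof.
  intro HK. destruct n. left; reflexivity. right. simpl. rewrite SP_app. apply rep_head. auto.
Qed.

Lemma noF K n x y a : 1 <= K -> 3 * K < a -> x ++ repeat false a ++ y <> concat (repeat (SP K) n).
Proof.
  intros HK Ha. revert x. induction n as [|n IH]; intros x H.
  - apply (f_equal (@length _)) in H. rewrite !length_app, repeat_length in H. simpl in H. lia.
  - simpl concat in H. rewrite SP_app in H.
    assert (Hp : exists z, repeat false a ++ y = negb true :: z) by (apply rep_head; lia).
    assert (Ht : forall k l, 1 <= k -> repeat true k ++ l = [] \/ exists L', repeat true k ++ l = true :: L')
      by (intros k l Hk; right; apply rep_head; auto).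
    destruct (RLskip true _ _ _ _ Hp H) as [x1 H1].
    destruct (RL3 _ _ _ _ a ltac:(lia) (Ht K _ HK) H1) as [E|[x2 H2]]. lia.
    destruct (RLskip true _ _ _ _ Hp H2) as [x3 H3].
    destruct (RL3 _ _ _ _ a ltac:(lia) (Ht (2 * K) _ ltac:(lia)) H3) as [E|[x4 H4]]. lia.
    destruct (RLskip true _ _ _ _ Hp H4) as [x5 H5].
    destruct (RL3 _ _ _ _ a ltac:(lia) (Ht (3 * K) _ ltac:(lia)) H5) as [E|[x6 H6]]. lia.
    destruct (RLskip true _ _ _ _ Hp H6) as [x7 H7].
    destruct (RL3 _ _ _ _ a ltac:(lia) (SPn_head K n HK) H7) as [E|[x8 H8]]. lia.
    exact (IH x8 H8).
Qed.

Lemma noFT K n x y : 1 <= K -> x ++ repeat false (3 * K) ++ repeat true (2 * K) ++ y <> concat (repeat (SP K) n).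
Proof.
  intros HK. revert x. induction n as [|n IH]; intros x H.
  - apply (f_equal (@length _)) in H. rewrite !length_app, !repeat_length in H. simpl in H. lia.
  - simpl concat in H. rewrite SP_app in H.
    assert (Hp : exists z, repeat false (3 * K) ++ repeat true (2 * K) ++ y = negb true :: z) by (apply rep_head; lia).
    assert (Hf : forall k l, 1 <= k -> repeat false k ++ l = [] \/ exists L', repeat false k ++ l = false :: L')
      by (intros k l Hk; right; apply rep_head; auto).
    destruct (RLskip true _ _ _ _ Hp H) as [x1 H1].
    destruct (RL2 K K _ _ _ (3 * K) (2 * K) ltac:(lia) ltac:(lia) HK (Hf K _ HK) H1) as [E|[x2 H2]]. lia.
    destruct (RL2 K (2 * K) _ _ _ (3 * K) (2 * K) ltac:(lia) ltac:(lia) ltac:(lia) (Hf (2 * K) _ ltac:(lia)) H2) as [E|[x3 H3]]. lia.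
    destruct (RL2 (2 * K) (3 * K) _ _ _ (3 * K) (2 * K) ltac:(lia) ltac:(lia) ltac:(lia) (Hf (3 * K) _ ltac:(lia)) H3) as [E|[x4 H4]]. lia.
    destruct n as [|n].
    + simpl in H4. rewrite app_nil_r in H4. apply (f_equal (@length _)) in H4.
      rewrite !length_app, !repeat_length in H4. lia.
    + simpl concat in H4, IH. rewrite SP_app in H4.
      destruct (RL2 (3 * K) K _ _ _ (3 * K) (2 * K) ltac:(lia) ltac:(lia) HK (Hf K _ HK) H4) as [E|[x5 H5]]. lia.
      apply (IH (repeat true K ++ x5)). rewrite SP_app. rewrite <- app_assoc, H5. reflexivity.
Qed.
Section Final.
Variable A : Grp.
Variable C : A -> Prop.
Variable phi : A -> A.

Lemma cancel (x y u : list (letter A)) : hnn_eq A C phi u [] -> hnn_eq A C phi (x ++ u ++ y) (x ++ y).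
Proof. intro H. exact (he_ctx A C phi x u [] y H). Qed.

Lemma tptn k : hnn_eq A C phi (tp A k ++ tn A k) [].
Proof.
  induction k as [|k IH]. apply he_refl.
  replace (tp A (S k) ++ tn A (S k)) with (tp A k ++ [LT; LTi] ++ tn A k).
  - eapply he_trans. apply cancel. apply he_tti. exact IH.
  - unfold tp, tn. rewrite repeat_S_r. simpl. rewrite <- app_assoc. reflexivity.
Qed.

Lemma tntp k : hnn_eq A C phi (tn A k ++ tp A k) [].
Proof.
  induction k as [|k IH]. apply he_refl.
  replace (tn A (S k) ++ tp A (S k)) with (tn A k ++ [LTi; LT] ++ tp A k).
  - eapply he_trans. apply cancel. apply he_tit. exact IH.
  - unfold tp, tn. rewrite repeat_S_r. simpl. rewrite <- app_assoc. reflexivity.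
Qed.

Lemma ginv_cancel (x : A) : hnn_eq A C phi [LA (ginv x); LA x] [].
Proof. eapply he_trans. apply he_mul. rewrite gmulV. apply he_one. Qed.

Lemma gmul_cancel (x : A) : hnn_eq A C phi [LA x; LA (ginv x)] [].
Proof. eapply he_trans. apply he_mul. rewrite gmulVr. apply he_one. Qed.

Lemma tp_add a b : tp A (a + b) = tp A a ++ tp A b.
Proof. apply repeat_app. Qed.
Lemma tn_add a b : tn A (a + b) = tn A a ++ tn A b.
Proof. apply repeat_app. Qed.

Lemma winv_app (u v : list (letter A)) : winv A (u ++ v) = winv A v ++ winv A u.
Proof. unfold winv. rewrite map_app, rev_app_distr. reflexivity. Qed.

Lemma winv_tp k : winv A (tp A k) = tn A k.
Proof. unfold winv, tp, tn. rewrite map_repeat, rev_repeat. reflexivity. Qed.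
Lemma winv_tn k : winv A (tn A k) = tp A k.
Proof. unfold winv, tp, tn. rewrite map_repeat, rev_repeat. reflexivity. Qed.

Lemma winv_conj k (x : A) : winv A (tp A k ++ [LA x] ++ tn A k) = tp A k ++ [LA (ginv x)] ++ tn A k.
Proof. rewrite !winv_app, winv_tp, winv_tn. rewrite <- app_assoc. reflexivity. Qed.

Lemma comm_core K (g h : A) :
  hnn_eq A C phi
   (tn A (2 * K) ++ [LA h] ++ tp A (3 * K) ++ [LA (ginv g)] ++ tn A (3 * K) ++ [LA (ginv h)])
   (tn A (2 * K) ++ tp A K ++ tp A (2 * K) ++ [LA (ginv g)] ++ tn A (2 * K) ++ tn A K ++
    tp A (3 * K) ++ [LA g] ++ tn A (3 * K) ++ [LA h] ++ tp A (3 * K) ++ [LA (ginv g)] ++ tn A (3 * K) ++ [LA (ginv h)]).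
Proof.
  set (rest := [LA h] ++ tp A (3 * K) ++ [LA (ginv g)] ++ tn A (3 * K) ++ [LA (ginv h)]).
  apply he_sym.
  replace (tn A (2 * K) ++ tp A K ++ tp A (2 * K) ++ [LA (ginv g)] ++ tn A (2 * K) ++ tn A K ++
    tp A (3 * K) ++ [LA g] ++ tn A (3 * K) ++ rest)
    with ([] ++ (tn A (2 * K) ++ tp A (2 * K)) ++ (tp A K ++ [LA (ginv g)] ++ tn A (3 * K) ++
    tp A (3 * K) ++ [LA g] ++ tn A (3 * K) ++ rest)).
  2:{ rewrite (app_assoc (tp A K) (tp A (2 * K))), <- tp_add.
      replace (K + 2 * K) with (2 * K + K) by lia. rewrite tp_add.
      rewrite (app_assoc (tn A (2 * K)) (tn A K)), <- tn_add.
      replace (2 * K + K) with (3 * K) by lia. simpl. rewrite <- !app_assoc. reflexivity. }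
  eapply he_trans. apply cancel. apply tntp. rewrite app_nil_l.
  replace (tp A K ++ [LA (ginv g)] ++ tn A (3 * K) ++ tp A (3 * K) ++ [LA g] ++ tn A (3 * K) ++ rest)
    with ((tp A K ++ [LA (ginv g)]) ++ (tn A (3 * K) ++ tp A (3 * K)) ++ ([LA g] ++ tn A (3 * K) ++ rest))
    by (rewrite <- !app_assoc; reflexivity).
  eapply he_trans. apply cancel. apply tntp.
  replace ((tp A K ++ [LA (ginv g)]) ++ [LA g] ++ tn A (3 * K) ++ rest)
    with (tp A K ++ [LA (ginv g); LA g] ++ (tn A (3 * K) ++ rest))
    by (rewrite <- !app_assoc; reflexivity).
  eapply he_trans. apply cancel. apply ginv_cancel.
  replace (tp A K ++ tn A (3 * K) ++ rest) with ([] ++ (tp A K ++ tn A K) ++ (tn A (2 * K) ++ rest)).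
  2:{ replace (3 * K) with (K + 2 * K) by lia. rewrite tn_add. simpl. rewrite <- !app_assoc. reflexivity. }
  eapply he_trans. apply cancel. apply tptn. rewrite app_nil_l. apply he_refl.
Qed.

Lemma commutator_w (g h : A) i : in_commutator A C phi (w_i A g h i).
Proof.
  set (K := 10 ^ i).
  set (a := tp A K ++ [LA g] ++ tn A K).
  set (b := tp A (2 * K) ++ [LA g] ++ tn A (2 * K)).
  set (c := tp A (3 * K) ++ [LA g] ++ tn A (3 * K)).
  exists [(a, [LA h]); (b, tp A K); (c, [LA h])].
  replace (concat (map (fun p => fst p ++ snd p ++ winv A (fst p) ++ winv A (snd p))
      [(a, [LA h]); (b, tp A K); (c, [LA h])]))
    with ((tp A K ++ [LA g] ++ tn A K ++ [LA h] ++ tp A K ++ [LA (ginv g)] ++ tn A K ++ [LA (ginv h)] ++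
          tp A (2 * K) ++ [LA g]) ++
      (tn A (2 * K) ++ tp A K ++ tp A (2 * K) ++ [LA (ginv g)] ++ tn A (2 * K) ++ tn A K ++
    tp A (3 * K) ++ [LA g] ++ tn A (3 * K) ++ [LA h] ++ tp A (3 * K) ++ [LA (ginv g)] ++ tn A (3 * K) ++ [LA (ginv h)])).
  2:{ cbn [map concat fst snd]. unfold a, b, c. rewrite !winv_conj, winv_tp.
      unfold winv at 1 2. simpl rev. rewrite app_nil_r. rewrite <- !app_assoc. reflexivity. }
  replace (w_i A g h i) with ((tp A K ++ [LA g] ++ tn A K ++ [LA h] ++ tp A K ++ [LA (ginv g)] ++ tn A K ++ [LA (ginv h)] ++
          tp A (2 * K) ++ [LA g]) ++
      (tn A (2 * K) ++ [LA h] ++ tp A (3 * K) ++ [LA (ginv g)] ++ tn A (3 * K) ++ [LA (ginv h)])).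
  2:{ unfold w_i. fold K. rewrite <- !app_assoc. reflexivity. }
  apply hctx_l. apply comm_core.
Qed.

End Final.
Lemma occ_bound (X : Type) (u v : list (letter X)) k : occ_k X u v k -> k * length u <= length v.
Proof.
  intros [x0 [xs [Hk Hv]]]. subst v k. rewrite length_app.
  enough (length xs * length u <= length (concat (map (fun x => u ++ x) xs))) by lia.
  induction xs as [|x xs IH]; simpl. lia. rewrite !length_app. lia.
Qed.

Lemma max_exists (P : nat -> Prop) B : P 0 -> (forall k, P k -> k <= B) -> exists m, P m /\ forall k, P k -> k <= m.
Proof.
  intro H0. induction B as [|B IH]; intro HB.
  - exists 0. split. exact H0. intros k Hk. specialize (HB k Hk). lia.
  - destruct (classic (P (S B))) as [HP|HP].
    + exists (S B). auto.
    + apply IH. intros k Hk. specialize (HB k Hk). destruct (Nat.eq_dec k (S B)); subst; [contradiction|lia].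
Qed.

Lemma count_exists (X : Type) (u v : list (letter X)) : 1 <= length u -> exists k, Defs.count_occ X u v k.
Proof.
  intro Hu. destruct (max_exists (occ_k X u v) (length v)) as [m [H1 H2]].
  - exists v, []. split. reflexivity. simpl. rewrite app_nil_r. reflexivity.
  - intros k Hk. apply occ_bound in Hk. nia.
  - exists m. split; auto.
Qed.
Lemma length_concat_repeat {X} (l : list X) n : length (concat (repeat l n)) = n * length l.
Proof. induction n; simpl; auto. rewrite length_app. lia. Qed.

Lemma tsigns_rev (A : Grp) (u : list (letter A)) : tsigns A (rev u) = rev (tsigns A u).
Proof.
  induction u as [|l u IH]; simpl; auto. rewrite tsigns_app, IH. destruct l; simpl; auto. rewrite app_nil_r. reflexivity.
Qed.

Lemma tsigns_linv (A : Grp) (u : list (letter A)) : tsigns A (map (linv A) u) = map negb (tsigns A u).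
Proof. induction u as [|l u IH]; simpl; auto. destruct l; simpl; rewrite IH; reflexivity. Qed.

Lemma tsigns_winv (A : Grp) (u : list (letter A)) : tsigns A (winv A u) = rev (map negb (tsigns A u)).
Proof. unfold winv. rewrite tsigns_rev, tsigns_linv. reflexivity. Qed.

Lemma tsigns_w_SP (A : Grp) (g h : A) i : tsigns A (w_i A g h i) = SP (10 ^ i).
Proof. rewrite tsigns_w. reflexivity. Qed.

Lemma rev_SP K : rev (map negb (SP K)) = repeat true (3 * K) ++ repeat false (3 * K) ++ repeat true (2 * K) ++
  repeat false (2 * K) ++ repeat true K ++ repeat false K ++ repeat true K ++ repeat false K.
Proof.
  unfold SP. rewrite !map_app, !map_repeat. simpl negb. rewrite !rev_app_distr, !rev_repeat.
  rewrite <- !app_assoc. reflexivity.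
Qed.

Lemma NI_inv K n (p : list bool) : 1 <= K -> p = rev (map negb (SP K)) ->
  ~ exists X Z, concat (repeat (SP K) n) = X ++ p ++ Z.
Proof.
  intros HK Hp [X [Z H]]. rewrite Hp, rev_SP in H.
  apply (noFT K n (X ++ repeat true (3 * K)) (repeat false (2 * K) ++ repeat true K ++ repeat false K ++
     repeat true K ++ repeat false K ++ Z) HK).
  rewrite H. rewrite <- !app_assoc. reflexivity.
Qed.

Lemma NI_big K K' n (p : list bool) : 1 <= K -> 3 * K < K' ->
  (exists P Q, p = P ++ repeat false K' ++ Q) ->
  ~ exists X Z, concat (repeat (SP K) n) = X ++ p ++ Z.
Proof.
  intros HK HK' [P [Q Hp]] [X [Z H]]. subst p.
  apply (noF K n (X ++ P) (Q ++ Z) K' HK HK'). rewrite H. rewrite <- !app_assoc. reflexivity.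
Qed.

Lemma pow_gap i j : i < j -> 3 * 10 ^ i < 10 ^ j.
Proof.
  intro H. assert (10 ^ S i <= 10 ^ j) by (apply Nat.pow_le_mono_r; lia).
  rewrite Nat.pow_succ_r' in H0. pose proof (pow10_pos i). lia.
Qed.

Section Main.
Variable A : Grp.
Variable C : A -> Prop.
Variable phi : A -> A.
Hypothesis HC : is_subgroup A C.
Hypothesis Hphi : is_inj_hom A C phi.
Variables g h : A.
Hypothesis Hg : ~ inH A C phi true g.
Hypothesis Hh : ~ inH A C phi false h.

Lemma final_state i n : 1 <= n -> exists E,
  (forall v, hnn_eq A C phi v (wpow _ (w_i A g h i) n) -> snd (act A C phi v (Init A)) = E) /\
  map fst E = concat (repeat (SP (10 ^ i)) n) /\ LastOK A E.
Proof.
  intro Hn. destruct (wpow_act A C phi HC Hphi g h Hg Hh i n) as [E [H1 [H2 [_ H4]]]].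
  exists E. split. 
  - intros v Hv. rewrite (act_inv A C phi HC Hphi _ _ _ Hv (valid_Init A C phi)). exact H1.
  - split. rewrite H2, tsigns_w_SP. reflexivity. auto.
Qed.

Lemma LB1 i n v : 1 <= n -> hnn_eq A C phi v (wpow _ (w_i A g h i) n) ->
  n * (14 * 10 ^ i + 8) <= length v.
Proof.
  intros Hn Hv. destruct (final_state i n Hn) as [E [H1 [H2 H3]]].
  pose proof (lower A C phi HC Hphi E H3 v (H1 v Hv)) as HL.
  rewrite H2, tw_SPn in HL by apply pow10_pos.
  rewrite <- (length_map fst E), H2, length_concat_repeat in HL. unfold SP in HL.
  rewrite !length_app, !repeat_length in HL. lia.
Qed.

Lemma LB2 i n u v k : 1 <= n -> ~ (exists X Z, concat (repeat (SP (10 ^ i)) n) = X ++ tsigns A u ++ Z) ->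
  1 <= nt A u -> hnn_eq A C phi v (wpow _ (w_i A g h i) n) -> occ_k A u v k ->
  n * (14 * 10 ^ i + 8) + k <= length v.
Proof.
  intros Hn Hni Hnt Hv [x0 [xs [Hk Hvx]]]. destruct (final_state i n Hn) as [E [H1 [H2 H3]]].
  pose proof (H1 v Hv) as Hs. rewrite Hvx in Hs.
  assert (Hni' : ~ (exists X Z, map fst E = X ++ tsigns A u ++ Z)) by (rewrite H2; exact Hni).
  pose proof (lower_blocks A C phi HC Hphi E H3 u x0 xs Hni' Hnt Hs) as HL.
  rewrite <- Hvx in HL. rewrite H2, tw_SPn in HL by apply pow10_pos.
  rewrite <- (length_map fst E), H2, length_concat_repeat in HL. unfold SP in HL.
  rewrite !length_app, !repeat_length in HL. lia.
Qed.

End Main.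
Lemma concat_rep_nil {X} (w : list X) n : concat (map (fun x => w ++ x) (repeat [] n)) = concat (repeat w n).
Proof. induction n; simpl; auto. rewrite app_nil_r, IHn. reflexivity. Qed.

Section Main2.
Variable A : Grp.
Variable C : A -> Prop.
Variable phi : A -> A.
Hypothesis HC : is_subgroup A C.
Hypothesis Hphi : is_inj_hom A C phi.
Variables g h : A.
Hypothesis Hg : ~ C g.
Hypothesis Hh : forall c, C c -> phi c <> h.

Lemma Hg' : ~ inH A C phi true g. Proof. exact Hg. Qed.
Lemma Hh' : ~ inH A C phi false h. Proof. intros [c [Hc E]]. exact (Hh c Hc E). Qed.

Lemma g_ne1 : g <> gone. Proof. intro E. apply Hg. rewrite E. apply HC. Qed.
Lemma h_ne1 : h <> gone.
Proof. intro E. apply (Hh gone). apply HC. rewrite E. apply (phi1 A C phi HC Hphi). Qed.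
Lemma inv_ne1 (x : A) : x <> gone -> ginv x <> gone.
Proof. intros Hx E. apply Hx. rewrite <- (ginvK A x), E. apply ginv1. Qed.

Lemma word_w i : is_word A (w_i A g h i).
Proof.
  intros a Ha. rewrite w_eq in Ha. rewrite !in_app_iff in Ha.
  pose proof g_ne1. pose proof h_ne1. pose proof (inv_ne1 g g_ne1). pose proof (inv_ne1 h h_ne1).
  assert (Hr : forall b k, ~ In (LA a) (repeat (tl A b) k)).
  { intros b k Hin. apply repeat_spec in Hin. destruct b; discriminate. }
  assert (Hs : forall x, In (LA a) [LA x] -> a = x).
  { intros x [E|[]]. injection E. auto. }
  repeat (destruct Ha as [Ha|Ha]; [first [exfalso; exact (Hr _ _ Ha) | apply Hs in Ha; subst a; assumption] |]).
  first [exfalso; exact (Hr _ _ Ha) | apply Hs in Ha; subst a; assumption].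
Qed.

Lemma word_wpow i n : is_word A (wpow _ (w_i A g h i) n).
Proof.
  intros a Ha. unfold wpow in Ha. apply in_concat in Ha. destruct Ha as [y [Hy Ha]].
  apply repeat_spec in Hy. subst y. exact (word_w i a Ha).
Qed.

Lemma len_wpow i n : length (wpow _ (w_i A g h i) n) = n * (14 * 10 ^ i + 8).
Proof. unfold wpow. rewrite length_concat_repeat, len_w. reflexivity. Qed.

Lemma wl i n : 1 <= n -> word_length A C phi (wpow _ (w_i A g h i) n) (n * (14 * 10 ^ i + 8)).
Proof.
  intro Hn. split.
  - exists (wpow _ (w_i A g h i) n). split. apply word_wpow. split. apply he_refl. apply len_wpow.
  - intros k [v [_ [Hv Hl]]]. subst k. exact (LB1 A C phi HC Hphi g h Hg' Hh' i n v Hn Hv).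
Qed.

Lemma part1 i n : 1 <= n -> cw_val A C phi (w_i A g h i) (wpow _ (w_i A g h i) n) n.
Proof.
  intro Hn. set (W := 14 * 10 ^ i + 8).
  assert (HW : length (w_i A g h i) = W) by apply len_w.
  assert (HW1 : 1 <= W) by (unfold W; lia).
  exists (n * W), (n * W - n). split. apply wl; auto. split; [split|].
  - exists (wpow _ (w_i A g h i) n), n. split. apply word_wpow. split. apply he_refl. split.
    + split.
      * exists [], (repeat [] n). split. apply repeat_length. simpl. rewrite concat_rep_nil. reflexivity.
      * intros k' Hk'. apply occ_bound in Hk'. rewrite len_wpow, HW in Hk'. fold W in Hk'. nia.
    + rewrite len_wpow. fold W. lia.
  - intros m [v [k [_ [Hv [[Hocc _] Hm]]]]]. subst m.
    pose proof (LB1 A C phi HC Hphi g h Hg' Hh' i n v Hn Hv) as H1. fold W in H1.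
    apply occ_bound in Hocc. rewrite HW in Hocc.
    destruct (Nat.le_gt_cases k n); nia.
  - nia.
Qed.

Lemma part_zero i n u : 1 <= n -> ~ (exists X Z, concat (repeat (SP (10 ^ i)) n) = X ++ tsigns A u ++ Z) ->
  1 <= nt A u -> cw_val A C phi u (wpow _ (w_i A g h i) n) 0.
Proof.
  intros Hn Hni Hnt. set (W := 14 * 10 ^ i + 8).
  assert (Hu : 1 <= length u) by (rewrite len_split; lia).
  exists (n * W), (n * W). split. apply wl; auto. split; [split|].
  - destruct (count_exists A u (wpow _ (w_i A g h i) n) Hu) as [k Hk].
    pose proof (LB2 A C phi HC Hphi g h Hg' Hh' i n u _ k Hn Hni Hnt (he_refl _ _ _ _) (proj1 Hk)) as H.
    rewrite len_wpow in H. fold W in H.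
    exists (wpow _ (w_i A g h i) n), k. split. apply word_wpow. split. apply he_refl. split. exact Hk.
    rewrite len_wpow. fold W. lia.
  - intros m [v [k [_ [Hv [[Hocc _] Hm]]]]]. subst m.
    pose proof (LB2 A C phi HC Hphi g h Hg' Hh' i n u v k Hn Hni Hnt Hv Hocc). fold W in H. lia.
  - lia.
Qed.

Lemma part2 i n : 1 <= n -> cw_val A C phi (winv A (w_i A g h i)) (wpow _ (w_i A g h i) n) 0.
Proof.
  intro Hn. apply part_zero; auto.
  - apply NI_inv. apply pow10_pos. rewrite tsigns_winv, tsigns_w_SP. reflexivity.
  - unfold nt. rewrite tsigns_winv, length_rev, length_map, nt_w. pose proof (pow10_pos i). lia.
Qed.

Lemma part3a i j n : i < j -> 1 <= n -> cw_val A C phi (w_i A g h j) (wpow _ (w_i A g h i) n) 0.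
Proof.
  intros Hij Hn. apply part_zero; auto.
  - apply (NI_big _ (10 ^ j)). apply pow10_pos. apply pow_gap; auto.
    rewrite tsigns_w_SP. unfold SP. eexists; eexists. reflexivity.
  - unfold nt. rewrite nt_w. pose proof (pow10_pos j). lia.
Qed.

Lemma part3b i j n : i < j -> 1 <= n -> cw_val A C phi (winv A (w_i A g h j)) (wpow _ (w_i A g h i) n) 0.
Proof.
  intros Hij Hn. apply part_zero; auto.
  - apply (NI_big _ (3 * 10 ^ j)). apply pow10_pos. pose proof (pow_gap i j Hij). lia.
    rewrite tsigns_winv, tsigns_w_SP, rev_SP. eexists; eexists. reflexivity.
  - unfold nt. rewrite tsigns_winv, length_rev, length_map, nt_w. pose proof (pow10_pos j). lia.
Qed.

End Main2.

Theorem lemma7p2 (A : Grp) (C : A -> Prop) (phi : A -> A)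
  (HC : is_subgroup A C) (Hphi : is_inj_hom A C phi)
  (HAC : exists a : A, ~ C a)
  (HAphiC : exists a : A, forall c, C c -> phi c <> a)
  (g h : A) (Hg : ~ C g) (Hh : forall c, C c -> phi c <> h) :
  (forall i n, 1 <= n -> cw_val A C phi (w_i A g h i) (wpow _ (w_i A g h i) n) n) /\
  (forall i n, 1 <= n ->
     cw_val A C phi (winv A (w_i A g h i)) (wpow _ (w_i A g h i) n) 0) /\
  (forall i j n, i < j -> 1 <= n ->
     cw_val A C phi (w_i A g h j) (wpow _ (w_i A g h i) n) 0 /\
     cw_val A C phi (winv A (w_i A g h j)) (wpow _ (w_i A g h i) n) 0) /\
  (forall i, in_commutator A C phi (w_i A g h i)).
Proof.
  split; [|split; [|split]].
  - intros i n Hn. apply part1; auto.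
  - intros i n Hn. apply part2; auto.
  - intros i j n Hij Hn. split. apply part3a; auto. apply part3b; auto.
  - intro i. apply commutator_w.
Qed.
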